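(* Let $\lambda_a,\lambda_b\in\{1,2\}$ and let $u_1,t,u_2$ be integers such that $(u_1,t)$ satisfies $S_{\lambda_a,\lambda_b}$ and $u_1u_2=t^3+t^{\lambda_a}+1$. If $v$ is a divisor of $u_1u_2$ and $t\mid (u_1-v)$, then $(v,t)$ satisfies $S_{\lambda_a,\lambda_b}$, i.e. there is a 4-chain $\langle v,t\rangle_{S_{\lambda_a,\lambda_b}}$ (in which $v,t,u_1u_2/v$ are consecutive terms).
   Context: For $\lambda_a,\lambda_b\in\{1,2\}$, a pair of integers $(x,y)$ satisfies the system $S_{\lambda_a,\lambda_b}$ if $x\mid y^3+y^{\lambda_a}+1$ and $y\mid x^3+x^{\lambda_b}+1$. For a pair $(x,y)$ satisfying $S_{\lambda_a,\lambda_b}$, $\langle x,y\rangle_{S_{\lambda_a,\lambda_b}}$ denotes the bi-infinite integer sequence $(u_n)$ with $u_0=x$, $u_1=y$ and $u_{n-1}u_{n+1}=u_n^3+u_n^{e_n}+1$ for all $n$, where $e_n$ has period 4 with $e_0=\lambda_b$, $e_1=\lambda_a$, $e_2=3-\lambda_b$, $e_3=3-\lambda_a$. *)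

(* Defs.v *)
From Stdlib Require Import ZArith.
Open Scope Z_scope.

Definition satisfiesS (la lb : Z) (x y : Z) : Prop :=
  (x | y ^ 3 + y ^ la + 1) /\ (y | x ^ 3 + x ^ lb + 1).

(* Main.v *)
Require Import Defs.
From Stdlib Require Import ZArith Lia.
Open Scope Z_scope.

Theorem corollary9 (la lb u1 t u2 v : Z)
  (hla : la = 1 \/ la = 2) (hlb : lb = 1 \/ lb = 2)
  (hS : satisfiesS la lb u1 t)
  (hprod : u1 * u2 = t ^ 3 + t ^ la + 1)
  (hv : (v | u1 * u2))
  (ht : (t | u1 - v)) :
  satisfiesS la lb v t.
Proof.
  destruct hS as [_ [m Hm]]. destruct ht as [k Hk].
  split.
  - rewrite <- hprod; exact hv.
  - assert (Hv : v = u1 - k * t) by lia. subst v.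
    destruct hlb as [-> | ->].
    + exists (m - (3*u1*u1*k - 3*u1*k*k*t + k*k*k*t*t) - k).
      assert (E : m * t = u1 ^ 3 + u1 ^ 1 + 1) by (rewrite Hm; ring).
      rewrite !Z.mul_sub_distr_r, E. ring.
    + exists (m - (3*u1*u1*k - 3*u1*k*k*t + k*k*k*t*t) - (2*u1*k - k*k*t)).
      assert (E : m * t = u1 ^ 3 + u1 ^ 2 + 1) by (rewrite Hm; ring).
      rewrite !Z.mul_sub_distr_r, E. ring.
Qed.
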